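(* For all $p\in\mathbb N=\{0,1,2,\dots\}$, $\zeta\in\{0,1\}$ and $0\le k\le n$, $$E_{n,k}(-1,2;\,2-\zeta+2p,\ \zeta-2p)=n!\binom{n+1}{2k+2p+1-\zeta}-(-1)^{k+p}\sum_{\ell=0}^{p-1}(-1)^\ell(2-\zeta+2\ell)^{\overline n}\binom{n+1}{k+p-\ell}.$$
   Context: Generalized Eulerian numbers $E_{n,k}(a,b;c_0,c_\infty)$: defined by $E_{0,0}=1$, $E_{n,k}=0$ if $n<0$, $k<0$ or $k>n$, and $E_{n+1,k+1}=[-an+b(k+1)+c_0]E_{n,k+1}+[(a+b)n-bk+c_\infty]E_{n,k}$ for $n\ge0$, $k\in\mathbb Z$. $x^{\overline n}=x(x+1)\cdots(x+n-1)$; $\binom{m}{j}=0$ if $j<0$ or $j>m$. *)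

(* Defs.v *)
From mathcomp Require Import all_boot all_order all_algebra.
Set Implicit Arguments. Unset Strict Implicit. Unset Printing Implicit Defensive.
Import Order.TTheory GRing.Theory Num.Theory.
Local Open Scope ring_scope.

(* Only indices 0 <= k are represented (k : nat); E_{n,k} = 0 for k < 0 is
   built in: the recurrence at k+1 = 0 reads E_{n+1,0} = (-a n + c0) E_{n,0}. *)
Fixpoint genEuler (a b c0 cinf : int) (n k : nat) {struct n} : int :=
  match n with
  | 0%N => if k is 0%N then 1 else 0
  | n'.+1 =>
      match k with
      | 0%N => (- a * n'%:Z + c0) * genEuler a b c0 cinf n' 0
      | k'.+1 =>
          (- a * n'%:Z + b * k'.+1%:Z + c0) * genEuler a b c0 cinf n' k'.+1
          + ((a + b) * n'%:Z - b * k'%:Z + cinf) * genEuler a b c0 cinf n' k'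
      end
  end.

Definition rising (x : int) (n : nat) : int := \prod_(i < n) (x + (i : nat)%:Z).

(* Main.v *)
Require Import Defs.
From mathcomp Require Import all_boot all_order all_algebra.
From mathcomp Require Import ring lra zify.
Import Order.TTheory GRing.Theory Num.Theory.
Local Open Scope ring_scope.

Lemma risingS x n : rising x n.+1 = rising x n * (x + n%:Z).
Proof. by rewrite /rising big_ord_recr. Qed.

Lemma E0 c0 ci n : genEuler (-1) 2 c0 ci n 0 = rising c0 n.
Proof.
elim: n => [|n IH]; first by rewrite /rising big_ord0.
rewrite /= IH risingS; ring.
Qed.

Lemma shift c0 n k :
  genEuler (-1) 2 (c0 + 2) (- c0) n k =
  genEuler (-1) 2 c0 (2 - c0) n k.+1 + (-1) ^+ k * rising c0 n * ('C(n.+1, k.+1))%:Z.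
Proof.
elim: n k => [|n IH] k.
  case: k => [|k]; rewrite /rising big_ord0 /=; first by rewrite binn; ring.
  by rewrite bin_small //; ring.
case: k => [|k].
  rewrite [LHS]/= IH [genEuler _ _ _ _ n.+1 1]/= !E0 risingS bin1.
  rewrite bin1 -[n.+2]addn2 -[n.+1]addn1 !PoszD; ring.
rewrite [LHS]/= !IH.
rewrite [genEuler _ _ _ _ n.+1 k.+2]/= risingS.
have h := mul_bin_left n.+1 k.+1.
set C1 := 'C(n.+1, k.+1) in h *. set C2 := 'C(n.+1, k.+2) in h *.
have e : ((k%:Z + 2) * C2%:Z = (n%:Z - k%:Z) * C1%:Z).
  move: h; rewrite subSS. case: (leqP k n) => hk h.
    nia.
  have -> : C2 = 0%N by rewrite /C2 bin_small //; lia.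
  have -> : C1 = 0%N by rewrite /C1 bin_small //; lia.
  by rewrite !mulr0.
rewrite binS -/C1 -/C2 PoszD !exprS.
rewrite (_ : Posz k.+1 = k%:Z + 1); last by rewrite -addn1 PoszD.
rewrite (_ : Posz k.+2 = k%:Z + 2); last by rewrite -addn2 PoszD.
apply/eqP; rewrite -subr_eq0; apply/eqP.
transitivity (2 * ((-1)^+k * rising c0 n) * ((n%:Z - k%:Z) * C1%:Z - (k%:Z+2) * C2%:Z)).
  ring.
by rewrite e subrr mulr0.
Qed.

Lemma binid n i :
  ((n.+1)`! * 'C(n.+2, i.+2))%:Z =
  (n%:Z + 3 + i%:Z) * (n`! * 'C(n.+1, i.+2))%:Z
  + (n%:Z + 1 - i%:Z) * (n`! * 'C(n.+1, i))%:Z.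
Proof.
have h1 := mul_bin_left n.+1 i.+1.
have h2 := mul_bin_left n.+1 i.
rewrite binS factS.
set A := 'C(n.+1, i) in h2 *. set B := 'C(n.+1, i.+1) in h1 h2 *.
set Cc := 'C(n.+1, i.+2) in h1 *.
have e1 : (i%:Z + 2) * Cc%:Z = (n%:Z - i%:Z) * B%:Z.
  move: h1; rewrite subSS. case: (leqP i n) => hk h.
    nia.
  have -> : Cc = 0%N by rewrite /Cc bin_small //; lia.
  have -> : B = 0%N by rewrite /B bin_small //; lia.
  by rewrite !mulr0.
have e2 : (n%:Z + 1 - i%:Z) * A%:Z = (i%:Z + 1) * B%:Z.
  move: h2. case: (leqP i n.+1) => hk h.
    nia.
  have -> : A = 0%N by rewrite /A bin_small //; lia.
  have -> : B = 0%N by rewrite /B bin_small //; lia.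
  by rewrite !mulr0.
apply/eqP; rewrite -subr_eq0; apply/eqP.
rewrite !PoszM PoszD.
transitivity ((n`!)%:Z * ((n%:Z + 1) * B%:Z - (i%:Z + 2) * Cc%:Z - (n%:Z + 1 - i%:Z) * A%:Z)).
  rewrite (_ : Posz n.+1 = n%:Z + 1); last by rewrite -addn1 PoszD.
  ring.
rewrite e1 e2; ring.
Qed.

Lemma base z n k : (z <= 1)%N ->
  genEuler (-1) 2 (2 - z%:Z) z%:Z n k = (n`! * 'C(n.+1, 2 * k + 1 - z))%:Z.
Proof.
move=> hz; elim: n k => [|n IH] k.
  case: k => [|k] /=.
    by case: z hz => [|[|]].
  by rewrite bin_small //; lia.
case: k => [|k].
  rewrite /= IH.
  clear IH; case: z hz => [|[|]] // _; rewrite ?subn0 ?subnn ?bin0 ?bin1 factS.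
    rewrite !PoszM (_ : Posz n.+1 = n%:Z + 1); last by rewrite -addn1 PoszD.
    rewrite (_ : Posz n.+2 = n%:Z + 2); last by rewrite -addn2 PoszD.
    ring.
  rewrite !PoszM (_ : Posz n.+1 = n%:Z + 1); last by rewrite -addn1 PoszD.
  ring.
rewrite [LHS]/= !IH.
have -> : (2 * k.+1 + 1 - z = (2 * k + 1 - z).+2)%N by lia.
rewrite binid.
have hi : ((2 * k + 1 - z)%N : int) = 2 * k%:Z + 1 - z%:Z.
  rewrite -subzn; last by lia.
  by rewrite PoszD PoszM.
rewrite hi (_ : Posz k.+1 = k%:Z + 1); last by rewrite -addn1 PoszD.
ring.
Qed.

Theorem mainTheorem17 (p z n k : nat) (hz : (z <= 1)%N) (hkn : (k <= n)%N) :
  genEuler (-1) 2 (2 - z%:Z + 2 * p%:Z) (z%:Z - 2 * p%:Z) n k =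
    (n`!)%:Z * ('C(n.+1, 2 * k + 2 * p + 1 - z))%:Z
    - (-1) ^+ (k + p) *
      \sum_(l < p) (-1) ^+ (l : nat) * rising (2 - z%:Z + 2 * (l : nat)%:Z) n
                   * ('C(n.+1, k + p - l))%:Z.
Proof.
clear hkn.
elim: p k => [|p IH] k.
  rewrite big_ord0 mulr0 subr0 mulr0 addr0 subr0 base // muln0 addn0.
  by rewrite PoszM.
have PS : Posz p.+1 = p%:Z + 1 by rewrite -[p.+1]addn1 PoszD.
rewrite (_ : 2 - z%:Z + 2 * (p.+1)%:Z = (2 - z%:Z + 2 * p%:Z) + 2);
  last by rewrite PS; ring.
rewrite (_ : z%:Z - 2 * (p.+1)%:Z = - (2 - z%:Z + 2 * p%:Z));
  last by rewrite PS; ring.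
rewrite shift (_ : 2 - (2 - z%:Z + 2 * p%:Z) = z%:Z - 2 * p%:Z); last by ring.
rewrite IH big_ord_recr /=.
rewrite (_ : (2 * k.+1 + 2 * p + 1 - z = 2 * k + 2 * p.+1 + 1 - z)%N); last by lia.
rewrite (_ : (k + p.+1 - p = k.+1)%N); last by lia.
under eq_bigr => l _ do rewrite addSnnS.
rewrite !exprD !(exprS _ p) -(signr_odd _ p); rewrite ?(exprS _ k); case: (odd p) => /=; ring.
Qed.
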